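(* Let $G$ be a weakly-reversible chemical reaction network in $s$ species, let $\mathbf{k}$ be a field of characteristic zero, and let $(\mathcal{E}_G)\subseteq \mathbf{k}[x_1,\dots,x_s]$ be the ideal generated by its associated event-system. Let $M$ and $N$ be distinct monic monomials in $x_1,\dots,x_s$. Then $M-N\in(\mathcal{E}_G)$ if and only if $M$ and $N$ are path-connected in the event-graph $\overline{G}$.
   Context: A chemical reaction network (CRN) consists of positive integers $s$ (species) and $n$ (complexes), a finite directed graph $G$ with vertex set $\{1,\dots,n\}$ and edge set $E(G)\subseteq\{1,\dots,n\}^2$, and an injective labeling of vertex $i$ by a monic monomial $\psi_i=\prod_{j=1}^s x_j^{y_{ij}}$ with $y_{ij}\in\mathbb{Z}_{\ge 0}$. $G$ is weakly-reversible iff each connected component of $G$ is strongly connected. The associated event-system $\mathcal{E}_G$ is the set of binomials $\psi_i-\psi_j$, one for each pair $\{i,j\}$ with $(i,j)\in E(G)$ or $(j,i)\in E(G)$ (the sign being fixed by some total order on monomials; it is irrelevant for the generated ideal). The event-graph $\overline{G}$ is the directed graph whose vertex set is the set of all monic monomials in $x_1,\dots,x_s$ (including $1$), with an edge $(N\psi_i, N\psi_j)$ for every $(i,j)\in E(G)$ and every monic monomial $N$. *)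

(* Defs.v *)
From HB Require Import structures.
From mathcomp Require Import all_boot all_order all_algebra.
From mathcomp Require Import mpoly.
From Stdlib Require Import Relations.

Set Implicit Arguments.
Unset Strict Implicit.
Unset Printing Implicit Defensive.

Import GRing.Theory.
Local Open Scope ring_scope.

Definition in_ideal_gen (R : comNzRingType) (gens : seq R) (p : R) : Prop :=
  exists cs : seq R, size cs = size gens /\
    p = \sum_(i < size gens) cs`_i * gens`_i.

Definition weakly_reversible (n : nat) (E : rel 'I_n) : Prop :=
  forall i j : 'I_n, connect (fun a b => E a b || E b a) i j -> connect E i j.

(* Event-system E_G : the binomials psi_i - psi_j, for every edge (i,j) of G,
   where psi_i = 'X_[y i].  (Listing both orientations when both (i,j) and
   (j,i) are edges does not change the generated ideal.) *)
Definition event_system (K : fieldType) (s n : nat) (E : rel 'I_n)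
    (y : 'I_n -> 'X_{1..s}) : seq {mpoly K[s]} :=
  [seq 'X_[y p.1] - 'X_[y p.2] | p <- enum [pred p : 'I_n * 'I_n | E p.1 p.2]].

(* Monic monomials are identified with their
   exponent vectors 'X_{1..s}; multiplication of monomials is addition. *)
Definition event_edge (s n : nat) (E : rel 'I_n) (y : 'I_n -> 'X_{1..s})
    (a b : 'X_{1..s}) : Prop :=
  exists (m : 'X_{1..s}) (i j : 'I_n),
    E i j /\ a = (m + y i)%MM /\ b = (m + y j)%MM.

Definition event_connected (s n : nat) (E : rel 'I_n) (y : 'I_n -> 'X_{1..s})
    (a b : 'X_{1..s}) : Prop :=
  clos_refl_trans _ (event_edge E y) a b.

(* Main.v *)
Require Import Defs.
From HB Require Import structures.
From mathcomp Require Import all_boot all_order all_algebra.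
From mathcomp Require Import mpoly.
From Stdlib Require Import Relations ClassicalEpsilon.

Set Implicit Arguments.
Unset Strict Implicit.
Unset Printing Implicit Defensive.
Import GRing.Theory.

Local Open Scope ring_scope.

Section Fm.
Variables (K : fieldType) (s : nat) (b : 'X_{1..s} -> K).

Definition Fm (p : {mpoly K[s]}) : K := \sum_(m <- msupp p) p@_m * b m.

Lemma FmS (S : seq 'X_{1..s}) p : uniq S -> {subset msupp p <= S} ->
  Fm p = \sum_(m <- S) p@_m * b m.
Proof.
move=> uS sub.
rewrite (bigID (fun m => m \in msupp p)) /= [X in _ + X]big1 ?addr0; last first.
  by move=> m /memN_msupp_eq0 ->; rewrite mul0r.
rewrite -big_filter /Fm; apply: perm_big.
apply: uniq_perm; rewrite ?msupp_uniq ?filter_uniq // => m.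
rewrite mem_filter; case H: (m \in msupp p) => //=. by rewrite sub.
Qed.

Lemma FmD p q : Fm (p + q) = Fm p + Fm q.
Proof.
pose S := undup (msupp p ++ msupp q).
have uS : uniq S by apply: undup_uniq.
have sp : {subset msupp p <= S}.
  by move=> m H; rewrite mem_undup mem_cat H.
have sq : {subset msupp q <= S}.
  by move=> m H; rewrite mem_undup mem_cat H orbT.
have spq : {subset msupp (p + q) <= S}.
  by move=> m /msuppD_le H; rewrite mem_undup.
rewrite (FmS uS spq) (FmS uS sp) (FmS uS sq).
rewrite -big_split; apply: eq_bigr => m _; by rewrite mcoeffD mulrDl.
Qed.

Lemma FmN p : Fm (- p) = - Fm p.
Proof.
rewrite (@FmS (msupp p)) ?msupp_uniq //; last first.
  by move=> m; rewrite (perm_mem (msuppN p)).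
rewrite /Fm -sumrN; apply: eq_bigr => m _; by rewrite mcoeffN mulNr.
Qed.

Lemma FmB p q : Fm (p - q) = Fm p - Fm q.
Proof. by rewrite FmD FmN. Qed.

Lemma Fm0 : Fm 0 = 0.
Proof. by have := FmB 0 0; rewrite subrr => ->; rewrite subrr. Qed.

Lemma FmZX k m : Fm (k *: 'X_[m]) = k * b m.
Proof.
rewrite (@FmS [:: m]) //; last by move=> x /msuppZ_le; rewrite msuppX.
by rewrite big_seq1 mcoeffZ mcoeffX eqxx mulr1.
Qed.

Lemma FmX m : Fm 'X_[m] = b m.
Proof. by have := FmZX 1 m; rewrite scale1r mul1r. Qed.

Lemma Fm_sum (I : Type) (r : seq I) (P : pred I) (G : I -> {mpoly K[s]}) :
  Fm (\sum_(i <- r | P i) G i) = \sum_(i <- r | P i) Fm (G i).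
Proof.
apply: (big_ind2 (fun x y => Fm x = y)); first exact: Fm0.
  by move=> ? ? ? ? <- <-; rewrite FmD.
by [].
Qed.

Lemma FmMX c a : Fm (c * 'X_[a]) = \sum_(m <- msupp c) c@_m * b (m + a)%MM.
Proof.
rewrite {1}(mpolyE c) mulr_suml Fm_sum; apply: eq_bigr => m _.
by rewrite -scalerAl -mpolyXD FmZX.
Qed.

End Fm.

Section Graph.
Variables (s n : nat) (E : rel 'I_n) (y : 'I_n -> 'X_{1..s}).
Local Notation conn := (event_connected E y).

Lemma conn_edge m i j : E i j -> conn (m + y i)%MM (m + y j)%MM.
Proof. by move=> eij; apply: rt_step; exists m, i, j. Qed.

Lemma conn_trans a b c : conn a b -> conn b c -> conn a c.
Proof. exact: rt_trans. Qed.

Lemma conn_path m i j : connect E i j -> conn (m + y i)%MM (m + y j)%MM.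
Proof.
move/connectP=> [p pth ->]; elim: p i pth => [|k p IH] i /=.
  by move=> _; apply: rt_refl.
move=> /andP[eik pk]; apply: conn_trans (conn_edge m eik) (IH k pk).
Qed.

Lemma conn_sym a b : weakly_reversible E -> conn a b -> conn b a.
Proof.
move=> wr; elim=> [x z [m [i [j [eij [-> ->]]]]]| x | x z w _ H1 _ H2].
- apply: conn_path; apply: wr; apply: connect1; by rewrite eij orbT.
- exact: rt_refl.
- exact: conn_trans H2 H1.
Qed.

End Graph.

Lemma in_idealP (R : comNzRingType) (gens : seq R) p :
  (exists c : 'I_(size gens) -> R, p = \sum_i c i * gens`_i) ->
  in_ideal_gen gens p.
Proof.
move=> [c ->]; exists (mkseq (fun k => if insub k is Some i then c i else 0) (size gens)).
rewrite size_mkseq; split=> //; apply: eq_bigr => i _.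
by rewrite nth_mkseq // valK.
Qed.

Lemma in_ideal_add (R : comNzRingType) (gens : seq R) p q :
  in_ideal_gen gens p -> in_ideal_gen gens q -> in_ideal_gen gens (p + q).
Proof.
move=> [c1 [s1 ->]] [c2 [s2 ->]]; apply: in_idealP.
exists (fun i => c1`_i + c2`_i); rewrite -big_split; apply: eq_bigr => i _.
by rewrite mulrDl.
Qed.

Unset Implicit Arguments.

Theorem lemma3p1 (K : fieldType) (s n : nat) (E : rel 'I_n)
    (y : 'I_n -> 'X_{1..s}) (M N : 'X_{1..s}) :
  (0 < s)%N -> (0 < n)%N ->
  injective y ->
  weakly_reversible E ->
  [pchar K] =i pred0 ->
  M != N ->
  (in_ideal_gen (event_system K E y) ('X_[M] - 'X_[N] : {mpoly K[s]})
   <-> event_connected E y M N).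
Proof.
move=> _ _ _ wr _ _; set gens := event_system K E y.
split.
- move=> [cs [_ Hs]].
  pose b m : K := if excluded_middle_informative (event_connected E y M m)
                  then 1 else 0.
  have H0 : Fm b ('X_[M] - 'X_[N]) = 0.
    rewrite Hs Fm_sum big1 // => i _.
    have /mapP[[a c] Hp ->] := mem_nth 0 (ltn_ord i).
    rewrite mem_enum /= in Hp.
    rewrite mulrBr FmB !FmMX -sumrB big1 // => m _.
    rewrite /b; case: excluded_middle_informative => h1;
      case: excluded_middle_informative => h2; rewrite ?subrr //.
    + by case: h2; apply: conn_trans h1 (conn_edge _ _ Hp).
    + case: h1; apply: conn_trans h2 _.
      by apply: conn_sym wr (conn_edge _ _ Hp).
  rewrite FmB !FmX /b in H0.
  case: excluded_middle_informative H0 => h1; last by case: h1; apply: rt_refl.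
  case: excluded_middle_informative => // h2.
  by rewrite subr0 => /eqP; rewrite oner_eq0.
- suff H : forall a c, event_connected E y a c ->
    in_ideal_gen gens ('X_[a] - 'X_[c] : {mpoly K[s]}) by apply: H.
  move=> a c; elim=> {a c}.
  + move=> a c [m [i [j [eij [-> ->]]]]].
    have gin : ('X_[y i] - 'X_[y j] : {mpoly K[s]}) \in gens.
      by apply/mapP; exists (i, j) => //; rewrite mem_enum.
    apply: in_idealP.
    have hk : (index ('X_[y i] - 'X_[y j] : {mpoly K[s]})%R gens < size gens)%N
      by rewrite index_mem.
    pose k : 'I_(size gens) := Ordinal hk.
    exists (fun l => if l == k then 'X_[m] else 0).
    rewrite (bigD1 k) //= eqxx big1 => [|l /negbTE -> //]; last by rewrite mul0r.
    by rewrite addr0 nth_index // !mpolyXD mulrBr.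
  + move=> a; apply: in_idealP; exists (fun _ => 0).
    by rewrite subrr big1 // => i _; rewrite mul0r.
  + move=> a b c _ H1 _ H2.
    have -> : ('X_[a] - 'X_[c] : {mpoly K[s]}) =
      ('X_[a] - 'X_[b]) + ('X_[b] - 'X_[c]) by rewrite addrA subrK.
    exact: in_ideal_add.
Qed.
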